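(* Let $\mathcal{A}$ be a learning-augmented memory-constrained algorithm for the $2$-server problem on the line and let $\lambda\in(0,1]$. If $\mathcal{A}$ is $(1+\lambda)$-consistent, then it is not $\beta'$-robust for any $\beta'<1+1/\lambda$ (i.e., it is at least $(1+1/\lambda)$-robust).
   Context: The $2$-server problem on the line: servers on $\mathbb{R}$, requests revealed online, each served by moving a server to it; cost = total distance moved; $\mathrm{OPT}$ is the optimal offline cost. A prediction gives for each request an index in $\{1,2\}$ (the predicted server, servers labeled by position); FtP serves each request by the predicted server, and $\eta=\mathrm{FtP}-\mathrm{OPT}$. $\alpha$-consistent: $\mathcal{A}(I)\le\alpha\,\mathrm{OPT}(I)+c$ for every instance and every prediction with $\eta=0$; $\beta$-robust: $\mathcal{A}(I)\le\beta\,\mathrm{OPT}(I)+c$ for every instance and prediction; $c$ depends only on the initial configuration. Memory-constrained: each decision depends only on the current configuration, current request and current prediction; several servers may be moved per request; and for any set of $k$ distinct points and any configuration there exists a finite sequence of requests among these points (a force) after which each point contains exactly one server. *)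

(* Defs.v *)
From HB Require Import structures.
From mathcomp Require Import all_boot all_order all_algebra.
From mathcomp Require Import boolp classical_sets reals.
Set Implicit Arguments. Unset Strict Implicit. Unset Printing Implicit Defensive.
Import Order.TTheory GRing.Theory Num.Theory.
Local Open Scope ring_scope.
Local Open Scope classical_set_scope.

(* Server labels: servers are labelled by position,
   [S1] = the leftmost server, [S2] = the rightmost server. *)
Inductive srv := S1 | S2.

Section TwoServer.
Variable R : realType.

(* A configuration of the 2 servers: a pair of positions (an unordered
   multiset; the canonical representative is sorted, see [sort2]). *)
Definition config := (R * R)%type.

Definition sort2 (C : config) : config := (Num.min C.1 C.2, Num.max C.1 C.2).

Definition dist (C D : config) : R :=
  Num.min (`|C.1 - D.1| + `|C.2 - D.2|) (`|C.1 - D.2| + `|C.2 - D.1|).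

Definition covers (C : config) (r : R) : Prop := C.1 = r \/ C.2 = r.

(* A memory-constrained (learning-augmented) algorithm: the new configuration
   is a function of the current configuration, current request and current
   prediction only (several servers may be moved). *)
Definition malg := config -> R -> srv -> config.

Definition valid_alg (A : malg) : Prop :=
  forall C r p, covers (A C r p) r.

(* Running A on a sequence of (request, prediction) pairs; the current
   configuration is always presented to A in canonical (sorted) form, so
   that A sees nothing but the configuration. *)
Fixpoint alg_cost (A : malg) (C : config) (s : seq (R * srv)) : R :=
  match s with
  | [::] => 0
  | (r, p) :: s' => let C' := sort2 (A C r p) in dist C C' + alg_cost A C' s'
  end.

Fixpoint alg_final (A : malg) (C : config) (s : seq (R * srv)) : config :=
  match s with
  | [::] => C
  | (r, p) :: s' => alg_final A (sort2 (A C r p)) s'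
  end.

Definition ALG (A : malg) (C0 : config) (s : seq (R * srv)) : R :=
  alg_cost A (sort2 C0) s.

Definition ftp_step : malg := fun C r p =>
  match p with
  | S1 => (r, Num.max C.1 C.2)
  | S2 => (Num.min C.1 C.2, r)
  end.

Definition FtP (C0 : config) (s : seq (R * srv)) : R := ALG ftp_step C0 s.

Fixpoint sched_cost (C : config) (Cs : seq config) : R :=
  match Cs with
  | [::] => 0
  | D :: Cs' => dist C D + sched_cost D Cs'
  end.

Definition feasible (rs : seq R) (Cs : seq config) : Prop :=
  size Cs = size rs /\
  forall i, (i < size rs)%N -> covers (nth (0, 0) Cs i) (nth 0 rs i).

Definition OPT (C0 : config) (rs : seq R) : R :=
  inf [set x | exists Cs, feasible rs Cs /\ x = sched_cost C0 Cs].

Definition eta (C0 : config) (s : seq (R * srv)) : R :=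
  FtP C0 s - OPT C0 (map fst s).

Definition consistent (A : malg) (alpha : R) : Prop :=
  forall C0 : config, exists c : R, forall s : seq (R * srv),
    eta C0 s = 0 -> ALG A C0 s <= alpha * OPT C0 (map fst s) + c.

Definition robust (A : malg) (beta : R) : Prop :=
  forall C0 : config, exists c : R, forall s : seq (R * srv),
    ALG A C0 s <= beta * OPT C0 (map fst s) + c.

Definition has_forces (A : malg) : Prop :=
  forall (x y : R), x != y -> forall C : config,
    exists rs : seq R, all (fun r => (r == x) || (r == y)) rs /\
      forall ps : seq srv, size ps = size rs ->
        let D := alg_final A (sort2 C) (zip rs ps) in
        (D.1 = x /\ D.2 = y) \/ (D.1 = y /\ D.2 = x).

Definition memory_constrained (A : malg) : Prop :=
  valid_alg A /\ has_forces A.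

End TwoServer.

(* Main.v *)
Require Import Defs.
From HB Require Import structures.
From mathcomp Require Import all_boot all_order all_algebra.
From mathcomp Require Import boolp classical_sets reals.
From mathcomp Require Import ring lra.
Import Order.TTheory GRing.Theory Num.Theory.
Local Open Scope ring_scope.

Ltac absr := repeat match goal with |- context[`|?x|] =>
  let h := fresh in have [h|h] := lerP 0 x;
  [rewrite (ger0_norm h) | rewrite (ltr0_norm h)] end.

Definition mn {R : realType} (C : config R) : R := Num.min C.1 C.2.
Definition mx {R : realType} (C : config R) : R := Num.max C.1 C.2.

Fixpoint pc {R : realType} (p : R) (s : seq R) : R :=
  match s with [::] => 0 | q :: s' => `|p - q| + pc q s' end.

Fixpoint cov_all {R : realType} (rs : seq R) (Cs : seq (config R)) : Prop :=
  match rs, Cs with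
  | [::], [::] => True
  | r :: rs', D :: Cs' => covers D r /\ cov_all rs' Cs'
  | _, _ => False
  end.

Fixpoint traj {R : realType} (A : malg R) (C : config R) (s : seq (R * srv)) :=
  match s with
  | [::] => [::]
  | (r, p) :: s' => sort2 (A C r p) :: traj A (sort2 (A C r p)) s'
  end.

Lemma archi {R : realType} (k c : R) : 0 < k -> exists N : nat, c < N%:R * k.
Proof.
move=> k0; exists (Num.bound (`|c| / k)).
have := @archi_boundP R (`|c| / k) (divr_ge0 (normr_ge0 c) (ltW k0)).
rewrite ltr_pdivrMr //; apply: le_lt_trans; exact: ler_norm.
Qed.

Lemma minmax_le {R : realType} (c1 c2 d1 d2 : R) :
  `|Num.min c1 c2 - Num.min d1 d2| + `|Num.max c1 c2 - Num.max d1 d2| <= `|c1 - d1| + `|c2 - d2|.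
Proof.
have [h1|h1] := lerP c1 c2; have [h2|h2] := lerP d1 d2;
rewrite ?(min_l (ltW h1)) ?(max_r (ltW h1)) ?(min_r (ltW h1)) ?(max_l (ltW h1))
 ?(min_l h1) ?(max_r h1) ?(min_r (ltW h2)) ?(max_l (ltW h2)) ?(min_l h2) ?(max_r h2);
absr; lra.
Qed.

Lemma dist_ge {R : realType} (C D : config R) :
  `|mn C - mn D| + `|mx C - mx D| <= dist C D.
Proof.
rewrite /dist le_min; apply/andP; split; first exact: minmax_le.
have := minmax_le C.1 C.2 D.2 D.1.
by rewrite /mn /mx (minC D.2) (maxC D.2).
Qed.

Lemma dist_le1 {R : realType} (C D : config R) :
  dist C D <= `|C.1 - D.1| + `|C.2 - D.2|.
Proof. by rewrite /dist ge_min lexx. Qed.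

Lemma dist_ge0 {R : realType} (C D : config R) : 0 <= dist C D.
Proof. by apply: le_trans _ (dist_ge C D); rewrite addr_ge0. Qed.

Lemma dist_refl {R : realType} (C : config R) : dist C C <= 0.
Proof. by apply: le_trans (dist_le1 C C) _; rewrite !subrr normr0 addr0. Qed.

Lemma sched_cost_cat {R : realType} (C : config R) Cs1 Cs2 :
  sched_cost C (Cs1 ++ Cs2) = sched_cost C Cs1 + sched_cost (last C Cs1) Cs2.
Proof.
elim: Cs1 C => [|D Cs1 IH] C /=; first by rewrite add0r.
by rewrite IH addrA.
Qed.

Lemma sched_cost_ge0 {R : realType} (C : config R) Cs : 0 <= sched_cost C Cs.
Proof.
elim: Cs C => [|D Cs IH] C //=; by rewrite addr_ge0 ?dist_ge0.
Qed.

Lemma pc_cat {R : realType} (p : R) s1 s2 :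
  pc p (s1 ++ s2) = pc p s1 + pc (last p s1) s2.
Proof.
elim: s1 p => [|q s1 IH] p /=; first by rewrite add0r.
by rewrite IH addrA.
Qed.

Lemma pc_ge0 {R : realType} (p : R) s : 0 <= pc p s.
Proof. elim: s p => [|q s IH] p //=; by rewrite addr_ge0. Qed.

Lemma pc_last {R : realType} (p : R) s : `|p - last p s| <= pc p s.
Proof.
elim: s p => [|q s IH] p /=; first by rewrite subrr normr0.
apply: le_trans (ler_distD q p (last q s)) _.
by rewrite lerD2l.
Qed.

Lemma sched_ge_pc {R : realType} (C : config R) Cs :
  pc (mn C) (map mn Cs) + pc (mx C) (map mx Cs) <= sched_cost C Cs.
Proof.
elim: Cs C => [|D Cs IH] C /=; first by rewrite addr0.
have := dist_ge C D; have := IH D; lra.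
Qed.

Lemma covers_mn {R : realType} (C : config R) q : covers C q -> mn C <= q.
Proof. by rewrite /mn ge_min => -[->|->]; rewrite lexx ?orbT. Qed.

Lemma covers_mx {R : realType} (C : config R) q : covers C q -> q <= mx C.
Proof. by rewrite /mx le_max => -[->|->]; rewrite lexx ?orbT. Qed.

Lemma covers_mn_eq {R : realType} (C : config R) q : covers C q -> q < mx C -> mn C = q.
Proof.
rewrite /mn /mx; case: C => c1 c2 /= H; have [h|h] := lerP c1 c2;
 rewrite ?(min_l h) ?(max_r h) ?(min_r (ltW h)) ?(max_l (ltW h)) => hq;
 case: H => /= H; lra.
Qed.

Lemma sort2_sorted {R : realType} (C : config R) : (sort2 C).1 <= (sort2 C).2.
Proof. rewrite /sort2 /=; case: C => a b /=; have [h|h] := lerP a b;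
 rewrite ?(min_l h) ?(max_r h) ?(min_r (ltW h)) ?(max_l (ltW h)) ?(ltW h) //. Qed.

Lemma sort2_id {R : realType} (C : config R) : C.1 <= C.2 -> sort2 C = C.
Proof. by case: C => a b /= h; rewrite /sort2 /= (min_l h) (max_r h). Qed.

Lemma covers_sort2 {R : realType} (C : config R) q : covers C q -> covers (sort2 C) q.
Proof.
rewrite /sort2 /covers; case: C => a b /=; have [h|h] := lerP a b;
 rewrite ?(min_l h) ?(max_r h) ?(min_r (ltW h)) ?(max_l (ltW h)) /=; tauto.
Qed.

Lemma mn_sorted {R : realType} (C : config R) : C.1 <= C.2 -> mn C = C.1.
Proof. by move=> h; rewrite /mn (min_l h). Qed.
Lemma mx_sorted {R : realType} (C : config R) : C.1 <= C.2 -> mx C = C.2.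
Proof. by move=> h; rewrite /mx (max_r h). Qed.

Lemma alg_cost_traj {R : realType} (A : malg R) C s :
  alg_cost A C s = sched_cost C (traj A C s).
Proof. by elim: s C => [|[r p] s IH] C //=; rewrite IH. Qed.

Lemma alg_final_traj {R : realType} (A : malg R) C s :
  alg_final A C s = last C (traj A C s).
Proof. by elim: s C => [|[r p] s IH] C //=. Qed.

Lemma traj_cov {R : realType} (A : malg R) C s :
  valid_alg A -> cov_all (map fst s) (traj A C s).
Proof.
move=> vA; elim: s C => [|[r p] s IH] C //=; split; last exact: IH.
exact/covers_sort2/vA.
Qed.

Lemma traj_cat {R : realType} (A : malg R) C s1 s2 :
  traj A C (s1 ++ s2) = traj A C s1 ++ traj A (alg_final A C s1) s2.
Proof. by elim: s1 C => [|[r p] s1 IH] C //=; rewrite IH. Qed.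

Lemma alg_final_cat {R : realType} (A : malg R) C s1 s2 :
  alg_final A C (s1 ++ s2) = alg_final A (alg_final A C s1) s2.
Proof. by elim: s1 C => [|[r p] s1 IH] C //=. Qed.

Lemma alg_cost_cat {R : realType} (A : malg R) C s1 s2 :
  alg_cost A C (s1 ++ s2) = alg_cost A C s1 + alg_cost A (alg_final A C s1) s2.
Proof.
by rewrite !alg_cost_traj traj_cat sched_cost_cat alg_final_traj.
Qed.

Lemma final_sorted {R : realType} (A : malg R) C s :
  C.1 <= C.2 -> (alg_final A C s).1 <= (alg_final A C s).2.
Proof.
elim: s C => [|[r p] s IH] C //= h; apply: IH; exact: sort2_sorted.
Qed.

Lemma cov_all_size {R : realType} (rs : seq R) Cs : cov_all rs Cs -> size Cs = size rs.
Proof. by elim: rs Cs => [|r rs IH] [|D Cs] //= [_ /IH ->]. Qed.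

Lemma cov_all_feasible {R : realType} (rs : seq R) Cs : cov_all rs Cs -> feasible rs Cs.
Proof.
move=> h; split; first exact: cov_all_size.
elim: rs Cs h => [|r rs IH] [|D Cs] //= [h1 h2] [|i] //= hi.
exact: IH.
Qed.

Lemma feasible_cov_all {R : realType} (rs : seq R) Cs : feasible rs Cs -> cov_all rs Cs.
Proof.
elim: rs Cs => [|r rs IH] [|D Cs] //= [] //= [hs] h; split; first exact: (h 0%N).
apply: IH; split; first by [].
by move=> i hi; apply: (h i.+1).
Qed.

Lemma cov_all_cat {R : realType} (l1 l2 : seq R) C1 C2 :
  cov_all l1 C1 -> cov_all l2 C2 -> cov_all (l1 ++ l2) (C1 ++ C2).
Proof.
by elim: l1 C1 => [|r l1 IH] [|D C1] //= [h1 h2] h3; split => //; apply: IH.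
Qed.

Lemma cov_all_split {R : realType} (l1 l2 : seq R) Cs :
  cov_all (l1 ++ l2) Cs -> exists C1 C2, [/\ Cs = C1 ++ C2, cov_all l1 C1 & cov_all l2 C2].
Proof.
elim: l1 Cs => [|r l1 IH] Cs /=; first by move=> h; exists [::], Cs.
case: Cs => [|D Cs] //= [h1 /IH [C1 [C2 [-> h2 h3]]]].
by exists (D :: C1), C2.
Qed.

Lemma rounds_ge {R : realType} (A : malg R) C round K N :
  alg_final A C round = C -> K <= alg_cost A C round ->
  N%:R * K <= alg_cost A C (flatten (nseq N round)).
Proof.
move=> hf hc; elim: N => [|N IH] /=; first by rewrite mul0r.
rewrite alg_cost_cat hf -addn1 natrD mulrDl mul1r addrC; exact: lerD.
Qed.

Lemma rounds_le {R : realType} (A : malg R) C round K N :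
  alg_final A C round = C -> alg_cost A C round <= K ->
  alg_cost A C (flatten (nseq N round)) <= N%:R * K.
Proof.
move=> hf hc; elim: N => [|N IH] /=; first by rewrite mul0r.
rewrite alg_cost_cat hf -addn1 natrD mulrDl mul1r addrC; exact: lerD.
Qed.

Definition mkp {R : realType} (f : R -> srv) (l : seq R) : seq (R * srv) :=
  map (fun q => (q, f q)) l.

Lemma map_fst_mkp {R : realType} f (l : seq R) : map fst (mkp f l) = l.
Proof. by elim: l => //= q l ->. Qed.

Lemma zip_mkp {R : realType} f (l : seq R) : zip l (map f l) = mkp f l.
Proof. by elim: l => //= q l ->. Qed.

Lemma mkp_cat {R : realType} f (l1 l2 : seq R) : mkp f (l1 ++ l2) = mkp f l1 ++ mkp f l2.
Proof. exact: map_cat. Qed.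

Lemma stay {R : realType} (A : malg R) C f (l : seq R) :
  (forall q, q \in l -> sort2 (A C q (f q)) = C) ->
  alg_cost A C (mkp f l) <= 0 /\ alg_final A C (mkp f l) = C.
Proof.
elim: l => [|q l IH] h //=.
have -> := h q (mem_head _ _).
have [IH1 IH2] : alg_cost A C (mkp f l) <= 0 /\ alg_final A C (mkp f l) = C.
  by apply: IH => q' hq'; apply: h; rewrite in_cons hq' orbT.
split => //; have := dist_refl C; lra.
Qed.

Lemma sched_nseq {R : realType} (D : config R) k : sched_cost D (nseq k D) <= 0.
Proof.
elim: k => //= k IH; have := dist_refl D; lra.
Qed.

Lemma cov_all_nseq {R : realType} (D : config R) (l : seq R) :
  all (fun q => (q == D.1) || (q == D.2)) l -> cov_all l (nseq (size l) D).
Proof.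
elim: l => //= q l IH /andP [h1 h2]; split; last exact: IH.
by case/orP: h1 => /eqP ->; [left|right].
Qed.

Lemma OPT_le {R : realType} (C : config R) rs Cs :
  feasible rs Cs -> OPT C rs <= sched_cost C Cs.
Proof.
move=> hf; rewrite /OPT; apply: ge_inf; last by exists Cs.
exists 0 => x [Cs' [_ ->]]; exact: sched_cost_ge0.
Qed.

Lemma OPT_ge {R : realType} (C : config R) rs m :
  (exists Cs, feasible rs Cs) ->
  (forall Cs, cov_all rs Cs -> m <= sched_cost C Cs) -> m <= OPT C rs.
Proof.
move=> [Cs hCs] h; rewrite /OPT; apply: lb_le_inf.
  by exists (sched_cost C Cs), Cs.
by move=> x [Cs' [hf ->]]; apply/h/feasible_cov_all.
Qed.

Lemma pc_two {R : realType} (p : R) s1 s2 :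
  `|p - last p s1| + `|last p s1 - last p (s1 ++ s2)| <= pc p (s1 ++ s2).
Proof.
rewrite pc_cat last_cat; apply: lerD; exact: pc_last.
Qed.

Lemma pc_sub {R : realType} (p : R) s1 s2 s3 :
  pc (last p s1) s2 <= pc p (s1 ++ s2 ++ s3).
Proof.
rewrite pc_cat pc_cat; have := pc_ge0 p s1; have := pc_ge0 (last (last p s1) s2) s3; lra.
Qed.

Lemma abs_ge1 {R : realType} (a b : R) : a - b <= `|a - b|.
Proof. exact: ler_norm. Qed.
Lemma abs_ge2 {R : realType} (a b : R) : b - a <= `|a - b|.
Proof. by rewrite distrC; exact: ler_norm. Qed.

Fixpoint alt_rs {R : realType} (r : R) n : seq R :=
  match n with 0%N => [::] | n'.+1 => 0 :: r :: alt_rs r n' end.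

Lemma shuttle {R : realType} (r : R) n Cs : 0 < r ->
  cov_all (alt_rs r n) Cs -> all (fun Z => r < mx Z) Cs ->
  2 * n%:R * r <= pc r (map mn Cs).
Proof.
move=> r0; elim: n Cs => [|n IH] Cs /=.
  by case: Cs => //= _ _; rewrite mulr0 mul0r.
case: Cs => [|Z1 [|Z2 Cs]] //=; first by case.
move=> [h1 [h2 h3]] /and3P [_ h4 h5].
have e2 := covers_mn_eq _ _ h2 h4; rewrite e2.
have := IH Cs h3 h5; have := covers_mn _ _ h1; have := abs_ge1 r (mn Z1);
have := abs_ge2 (mn Z1) r; rewrite -addn1 natrD; lra.
Qed.

Lemma block_cases {R : realType} (r : R) n Cb : 0 < r ->
  cov_all (r :: alt_rs r n) Cb ->
  (exists u1 Z u2, Cb = u1 ++ Z :: u2 /\ mx Z <= r) \/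
  (exists B0 T, [/\ Cb = B0 :: T, mn B0 = r & 2 * n%:R * r <= pc r (map mn T)]).
Proof.
move=> r0 hc; case: (boolP (has (fun Z => mx Z <= r) Cb)) => hh.
  left; case/hasP: hh => Z hZ hZr; case/splitPr: hZ => u1 u2.
  by exists u1, Z, u2.
right; have ha : all (fun Z => r < mx Z) Cb.
  apply/allP => Z hZ; rewrite ltNge; apply/negP => h; move/negP: hh; apply.
  by apply/hasP; exists Z.
clear hh; case: Cb hc ha => [|B0 T] //= [h1 h2] /andP [h3 h4].
exists B0, T; split => //; first exact: (covers_mn_eq _ _ h1).
exact: shuttle.
Qed.

Lemma opt_round {R : realType} (r : R) n S G0 Cs : 0 < r -> r < 1 ->
  1 <= n%:R * r -> 1 <= mx S ->
  cov_all (G0 ++ r :: alt_rs r n ++ [:: 1]) Cs ->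
  2 * (1 - r) <= sched_cost S Cs /\ 1 <= mx (last S Cs).
Proof.
move=> r0 r1 hn hS hc.
have e : G0 ++ r :: alt_rs r n ++ [:: 1] = G0 ++ ((r :: alt_rs r n) ++ [:: 1]) by [].
rewrite e in hc; case/cov_all_split: hc => Cg [Crest [-> hg hrest]].
case/cov_all_split: hrest => Cb [Cl [-> hb hl]].
case: Cl hl => [|Z1 [|? ?]] /=; [by case | idtac | by case].
move=> [hZ1 _].
have hZ1m : 1 <= mx Z1 := covers_mx _ _ hZ1.
have hlast : last S (Cg ++ Cb ++ [:: Z1]) = Z1 by rewrite !last_cat.
rewrite hlast; split => //.
apply: le_trans (sched_ge_pc _ _).
have := pc_ge0 (mn S) (map mn (Cg ++ Cb ++ [:: Z1])).
have := pc_ge0 (mx S) (map mx (Cg ++ Cb ++ [:: Z1])).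
case: (block_cases _ _ _ r0 hb) => [[u1 [Z [u2 [eb hZ]]]] | [B0 [T [eb hB0 hT]]]]; subst Cb.
- have el : Cg ++ (u1 ++ Z :: u2) ++ [:: Z1] = (Cg ++ u1 ++ [:: Z]) ++ (u2 ++ [:: Z1]).
    by rewrite -!catA.
  rewrite el; have := pc_two (mx S) (map mx (Cg ++ u1 ++ [:: Z])) (map mx (u2 ++ [:: Z1])).
  rewrite -map_cat !last_map !last_cat /=.
  have := abs_ge1 (mx S) (mx Z); have := abs_ge2 (mx Z) (mx Z1); lra.
- have el : Cg ++ (B0 :: T) ++ [:: Z1] = (Cg ++ [:: B0]) ++ T ++ [:: Z1].
    by rewrite -!catA.
  rewrite el; have := pc_sub (mn S) (map mn (Cg ++ [:: B0])) (map mn T) (map mn [:: Z1]).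
  rewrite -!map_cat last_map last_cat /= hB0.
  lra.
Qed.

Lemma opt_rounds {R : realType} (r : R) n G N S G0 Cs : 0 < r -> r < 1 ->
  1 <= n%:R * r -> 1 <= mx S ->
  cov_all (G0 ++ flatten (nseq N (r :: alt_rs r n ++ 1 :: G))) Cs ->
  N%:R * (2 * (1 - r)) <= sched_cost S Cs.
Proof.
move=> r0 r1 hn; elim: N S G0 Cs => [|N IH] S G0 Cs hS hc.
  by rewrite mul0r; exact: sched_cost_ge0.
have e : G0 ++ flatten (nseq N.+1 (r :: alt_rs r n ++ 1 :: G)) =
  (G0 ++ r :: alt_rs r n ++ [:: 1]) ++ (G ++ flatten (nseq N (r :: alt_rs r n ++ 1 :: G))).
  by rewrite /= -!catA /= -!catA.
rewrite e in hc; case/cov_all_split: hc => C1 [C2 [-> h1 h2]].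
case: (opt_round _ _ _ _ _ r0 r1 hn hS h1) => hc1 hl.
have := IH _ _ _ hl h2; rewrite sched_cost_cat -addn1 natrD mulrDl mul1r; lra.
Qed.

Lemma last_nseq' {T : Type} (x : T) k : last x (nseq k x) = x.
Proof. by elim: k. Qed.

Lemma mn01 {R : realType} : mn ((0 : R), (1 : R)) = 0.
Proof. by rewrite /mn /= (min_l ler01). Qed.
Lemma mx01 {R : realType} : mx ((0 : R), (1 : R)) = 1.
Proof. by rewrite /mx /= (max_r ler01). Qed.

Lemma alg_cons_lb {R : realType} (r : R) n D T Rest : 0 < r -> r < 1 ->
  1 <= n%:R * r -> (0 < n)%N -> mn D = r ->
  cov_all (r :: alt_rs r n) (D :: T) ->
  mx (last D (T ++ Rest)) = 1 ->
  2 <= sched_cost (0, 1) (D :: T ++ Rest).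
Proof.
move=> r0 r1 hn n0 hD hc hl; apply: le_trans (sched_ge_pc _ _).
have hx1 : 2 * r <= pc (mn ((0:R), (1:R))) (map mn (D :: T ++ Rest)).
  clear hl; case: n n0 hn hc => // n' _ hn.
  case: T => [|A1 T] /=; first by case=> _ [].
  move=> [_ [hA1 _]]; have := covers_mn _ _ hA1.
  have := pc_ge0 (mn A1) (map mn (T ++ Rest)).
  have := abs_ge2 (mn ((0:R),(1:R))) (mn D); have := abs_ge1 (mn D) (mn A1).
  rewrite mn01 hD; lra.
have hy0 := pc_ge0 (mx ((0:R),(1:R))) (map mx (D :: T ++ Rest)).
have hx0 := pc_ge0 (mn ((0:R),(1:R))) (map mn (D :: T ++ Rest)).
case: (block_cases _ _ _ r0 hc) => [[u1 [Z [u2 [eb hZ]]]] | [B0 [T0 [eb hB0 hT]]]].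
- have eW : D :: T ++ Rest = (u1 ++ [:: Z]) ++ (u2 ++ Rest).
    by rewrite -cat_cons eb -!catA.
  have H := pc_two (mx ((0:R),(1:R))) (map mx (u1 ++ [:: Z])) (map mx (u2 ++ Rest)).
  rewrite -map_cat -eW !last_map last_cat !last_cons hl in H; move: H.
  rewrite (_ : last Z [::] = Z) //.
  have := abs_ge1 (mx ((0:R),(1:R))) (mx Z); have := abs_ge2 (mx Z) 1.
  have := @mx01 R; lra.
- case: eb => eB eT; subst B0 T0.
  have : pc r (map mn T) <= pc (mn ((0:R),(1:R))) (map mn (D :: T ++ Rest)).
    rewrite /= map_cat pc_cat hD; have := pc_ge0 (last r (map mn T)) (map mn Rest).
    have := normr_ge0 (mn ((0:R), (1:R)) - r); lra.
  lra.
Qed.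

Lemma alg_rob_lb {R : realType} (r : R) D T1 T2 : 0 < r -> r < 1 ->
  mx D = r -> mn (last D T1) = r -> mx (last D T1) = 1 ->
  mn (last D (T1 ++ T2)) = 0 -> mx (last D (T1 ++ T2)) = 1 ->
  2 <= sched_cost (0, 1) (D :: T1 ++ T2).
Proof.
move=> r0 r1 hD h1 h2 h3 h4; apply: le_trans (sched_ge_pc _ _).
have H1 := pc_two (mn ((0:R),(1:R))) (map mn (D :: T1)) (map mn T2).
rewrite -map_cat cat_cons !last_map !last_cons h1 h3 in H1.
have H2 := pc_two (mx ((0:R),(1:R))) (map mx [:: D]) (map mx (T1 ++ T2)).
rewrite -map_cat cat1s !last_map !last_cons h4 (_ : last D [::] = D) // hD in H2.
have := abs_ge2 (mn ((0:R),(1:R))) r; have := abs_ge1 r 0;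
have := abs_ge1 (mx ((0:R),(1:R))) r; have := abs_ge2 r 1.
have := @mx01 R; have := @mn01 R.
lra.
Qed.

Definition pr {R : realType} (q : R) : srv := if q == 0 then S1 else S2.

Lemma alg_cost_cons {R : realType} (A : malg R) C q p s :
  alg_cost A C ((q, p) :: s) = dist C (sort2 (A C q p)) + alg_cost A (sort2 (A C q p)) s.
Proof. by []. Qed.
Lemma alg_final_cons {R : realType} (A : malg R) C q p s :
  alg_final A C ((q, p) :: s) = alg_final A (sort2 (A C q p)) s.
Proof. by []. Qed.

Lemma mem_alt {R : realType} (r : R) n q : q \in alt_rs r n -> (q == 0) || (q == r).
Proof.
elim: n => //= n IH; rewrite !in_cons => /orP [->//|/orP [->|/IH//]].
by rewrite orbT.
Qed.

Lemma ftp_round {R : realType} (r : R) n (rsF : seq R) : 0 < r -> r < 1 ->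
  all (fun q => (q == 0) || (q == 1)) rsF ->
  alg_cost (@ftp_step R) (0,1) (mkp pr (r :: alt_rs r n ++ 1 :: rsF)) <= 2 * (1 - r) /\
  alg_final (@ftp_step R) (0,1) (mkp pr (r :: alt_rs r n ++ 1 :: rsF)) = (0,1).
Proof.
move=> r0 r1 hF.
have prr : pr r = S2 by rewrite /pr gt_eqF.
have pr1 : @pr R 1 = S2 by rewrite /pr oner_eq0.
have e1 : sort2 ((@ftp_step R) (0,1) r S2) = (0, r).
  by rewrite /ftp_step /= (min_l ler01) sort2_id //= ltW.
have e2 : sort2 ((@ftp_step R) (0, r) 1 S2) = (0,1).
  by rewrite /ftp_step /= (min_l (ltW r0)) sort2_id //= ler01.
have st1 : forall q, q \in alt_rs r n -> sort2 ((@ftp_step R) (0,r) q (pr q)) = (0,r).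
  move=> q /mem_alt /orP [/eqP ->|/eqP ->].
    by rewrite /pr eqxx /ftp_step /= (max_r (ltW r0)) sort2_id //= ltW.
  by rewrite prr /ftp_step /= (min_l (ltW r0)) sort2_id //= ltW.
have st2 : forall q, q \in rsF -> sort2 ((@ftp_step R) (0,1) q (pr q)) = (0,1).
  move=> q hq; move/allP: hF => /(_ q hq) /orP [/eqP ->|/eqP ->].
    by rewrite /pr eqxx /ftp_step /= (max_r ler01) sort2_id //= ler01.
  by rewrite pr1 /ftp_step /= (min_l ler01) sort2_id //= ler01.
have -> : mkp pr (r :: alt_rs r n ++ 1 :: rsF) =
   (r, S2) :: (mkp pr (alt_rs r n) ++ ((1, S2) :: mkp pr rsF)).
  by rewrite /mkp /= map_cat /= prr pr1.
rewrite alg_cost_cons alg_final_cons e1 alg_cost_cat alg_final_cat.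
have [c1 f1] := stay (@ftp_step R) (0,r) pr _ st1.
rewrite f1 alg_cost_cons alg_final_cons e2.
have [c2 f2] := stay (@ftp_step R) (0,1) pr _ st2.
rewrite f2; split => //.
have := dist_le1 ((0:R),(1:R)) (0, r); have := dist_le1 ((0:R), r) (0, 1).
have a1 : `|1 - r| = 1 - r by rewrite gtr0_norm // subr_gt0.
have a2 : `|r - 1| = 1 - r by rewrite distrC.
rewrite /= subrr normr0 !add0r a1 a2.
lra.
Qed.

Definition rsched {R : realType} (r : R) k1 k2 : seq (config R) :=
  (r,1) :: nseq k1 (r,1) ++ nseq k2.+1 (0,1).

Lemma rsched_ok {R : realType} (r : R) k1 k2 : 0 < r -> r < 1 ->
  sched_cost (0,1) (rsched r k1 k2) <= 2 * r /\ last (0,1) (rsched r k1 k2) = (0,1).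
Proof.
move=> r0 r1; rewrite /rsched; split; last by rewrite last_cons last_cat /= last_nseq'.
rewrite [sched_cost _ _]/= sched_cost_cat last_nseq' [sched_cost (r,1) (_ :: _)]/=.
have := sched_nseq (r,1) k1; have := sched_nseq ((0:R),(1:R)) k2.
have := dist_le1 ((0:R),(1:R)) (r, 1); have := dist_le1 (r,(1:R)) (0, 1).
rewrite /= !subrr normr0 !addr0 subr0 distrC subr0 (gtr0_norm r0).
lra.
Qed.

Lemma rsched_rounds {R : realType} (r : R) k1 k2 N : 0 < r -> r < 1 ->
  sched_cost (0,1) (flatten (nseq N (rsched r k1 k2))) <= N%:R * (2 * r).
Proof.
move=> r0 r1; elim: N => [|N IH]; first by rewrite mul0r.
have [h1 h2] := rsched_ok _ k1 k2 r0 r1.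
rewrite (_ : flatten (nseq N.+1 _) = rsched r k1 k2 ++ flatten (nseq N (rsched r k1 k2))) //.
rewrite sched_cost_cat h2 -addn1 natrD mulrDl mul1r; lra.
Qed.

Lemma cov_flatten {R : realType} (l : seq R) Cs N :
  cov_all l Cs -> cov_all (flatten (nseq N l)) (flatten (nseq N Cs)).
Proof. by move=> h; elim: N => //= N IH; apply: cov_all_cat. Qed.

Lemma pair_sorted {R : realType} (x : config R) a b : a < b -> x.1 <= x.2 ->
  (x.1 = a /\ x.2 = b) \/ (x.1 = b /\ x.2 = a) -> x = (a, b).
Proof.
case: x => x1 x2 /= hab hx [[-> ->]//|[e1 e2]]; subst; exfalso; lra.
Qed.

Lemma ftp_valid {R : realType} : valid_alg (@ftp_step R).
Proof. by move=> C q [] /=; [left|right]. Qed.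

Theorem theorem7 (R : realType) (A : malg R) (lambda : R) :
  0 < lambda <= 1 ->
  memory_constrained A ->
  consistent A (1 + lambda) ->
  forall beta' : R, beta' < 1 + lambda^-1 -> ~ robust A beta'.
Proof.
move=> /andP [l0 l1] [vA fA] hcons b hb hrob.
set mu := lambda^-1.
have mu0 : 0 < mu by rewrite invr_gt0.
have lmu : lambda * mu = 1 by rewrite mulfV // gt_eqF.
set M := Num.max b 1.
have bM : b <= M by rewrite le_max lexx.
have oM : 1 <= M by rewrite le_max lexx orbT.
have Mmu : M < 1 + mu.
  rewrite gt_max hb /=; lra.
set Q := M + 1 + mu.
have Q0 : 0 < Q by rewrite /Q; lra.
set r := 2 / Q.
have rQ : r * Q = 2 by rewrite /r divfK // gt_eqF.
have r0 : 0 < r by rewrite /r divr_gt0.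
have r1 : r < 1.
  by rewrite -(ltr_pM2r Q0) mul1r rQ /Q; lra.
have hMr : M * r < 1.
  rewrite -(ltr_pM2r Q0) mul1r -mulrA rQ /Q; lra.
have hr1 : lambda < r * (1 + lambda).
  have h : 1 < r + r * mu.
    have e : r * Q = r * M + r + r * mu by rewrite /Q; ring.
    move: hMr; rewrite mulrC; lra.
  have e : lambda * (r + r * mu) = r * (1 + lambda).
    by rewrite mulrDr (mulrCA lambda r mu) lmu mulr1 mulrDr mulr1 mulrC addrC.
  rewrite -e -[X in X < _]mulr1 ltr_pM2l //.
have [n hn'] := archi r 1 r0.
have hn : 1 <= n%:R * r by rewrite ltW.
have n0 : (0 < n)%N by case: n hn' {hn} => //; rewrite mul0r ltr10.
set C : config R := (0, 1).
have hC : C.1 <= C.2 by rewrite /= ler01.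
have sC : sort2 C = C by rewrite sort2_id.
set D := sort2 (A C r (pr r)).
have hDs : D.1 <= D.2 by exact: sort2_sorted.
have hDc : covers D r by apply/covers_sort2/vA.
have hD2 : D.2 = r.
  case: (eqVneq D.2 r) => // hne; exfalso.
  have hD1 : D.1 = r by case: hDc => // e; rewrite e eqxx in hne.
  have hmnD : mn D = r by rewrite mn_sorted.
  set P := mkp pr (r :: alt_rs r n ++ [:: 1]).
  set E := alg_final A C P.
  have hEs : E.1 <= E.2 by exact: final_sorted.
  have h01 : (0:R) != 1 by rewrite eq_sym oner_eq0.
  have [rsF [hallF hF]] := fA 0 1 h01 E.
  have := hF (map pr rsF) (size_map _ _); rewrite sort2_id // zip_mkp => hF'.
  set F := mkp pr rsF.
  have hfinF : alg_final A E F = C.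
    exact: (pair_sorted _ _ _ ltr01 (final_sorted _ _ _ hEs) hF').
  set round := P ++ F.
  have hre : round = mkp pr (r :: alt_rs r n ++ 1 :: rsF).
    by rewrite /round /P /F -mkp_cat /= -catA.
  have hfin : alg_final A C round = C by rewrite alg_final_cat.
  have hcost : 2 <= alg_cost A C round.
    rewrite alg_cost_traj /round traj_cat.
    have eTP : traj A C P = D :: traj A D (mkp pr (alt_rs r n ++ [:: 1])) := erefl.
    rewrite eTP mkp_cat traj_cat -cat_cons -catA cat_cons.
    apply: (alg_cons_lb r n) => //.
      split => //; have := traj_cov A D (mkp pr (alt_rs r n)) vA; by rewrite map_fst_mkp.
    have := alg_final_traj A C round; rewrite hfin /round traj_cat eTP mkp_cat traj_cat.
    rewrite -cat_cons -catA cat_cons last_cons => <-.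
    by rewrite /C mx01.
  have [c hc] := hcons C.
  have hk : 0 < 2 - (1 + lambda) * (2 * (1 - r)) by lra.
  have [N hN] := archi _ c hk.
  set s := flatten (nseq N round).
  have hALG : N%:R * 2 <= ALG A C s by rewrite /ALG sC; exact: rounds_ge.
  have [fc ff] := ftp_round r n rsF r0 r1 hallF.
  have hFtP : FtP C s <= N%:R * (2 * (1 - r)).
    by rewrite /FtP /ALG sC; apply: rounds_le; rewrite hre.
  have hms : map fst s = flatten (nseq N (r :: alt_rs r n ++ 1 :: rsF)).
    by rewrite /s map_flatten map_nseq hre map_fst_mkp.
  have hfeas : feasible (map fst s) (traj (@ftp_step R) C s).
    apply: cov_all_feasible; exact/traj_cov/ftp_valid.
  have hOle : OPT C (map fst s) <= FtP C s.
    by rewrite /FtP /ALG sC alg_cost_traj; exact: OPT_le.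
  have hOge : N%:R * (2 * (1 - r)) <= OPT C (map fst s).
    apply: OPT_ge; first by exists (traj (@ftp_step R) C s).
    move=> Cs; rewrite hms => hcs.
    apply: (opt_rounds r n rsF N C [::] Cs) => //; by rewrite /C mx01.
  have heta : Defs.eta C s = 0 by rewrite /Defs.eta; lra.
  have := hc s heta.
  have hl0 : 0 <= 1 + lambda by lra.
  have := ler_wpM2l hl0 hOle; have := ler_wpM2l hl0 hFtP.
  have e : N%:R * (2 - (1 + lambda) * (2 * (1 - r))) =
     N%:R * 2 - (1 + lambda) * (N%:R * (2 * (1 - r))) by ring.
  lra.
have hmxD : mx D = r by rewrite mx_sorted.
have hsD : sort2 D = D by rewrite sort2_id.
have hr1n : r != 1 by rewrite lt_eqF.
have [rs1 [hall1 hF1]] := fA r 1 hr1n D.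
have := hF1 (map pr rs1) (size_map _ _); rewrite hsD zip_mkp => hF1'.
set G1 := mkp pr rs1.
have hE1 : alg_final A D G1 = (r, 1).
  exact: (pair_sorted _ _ _ r1 (final_sorted _ _ _ hDs) hF1').
have h01 : (0:R) != 1 by rewrite eq_sym oner_eq0.
have [rs2 [hall2 hF2]] := fA 0 1 h01 (r, 1).
have hsE1 : sort2 (r, 1) = (r, 1) by rewrite sort2_id //= ltW.
have := hF2 (map pr rs2) (size_map _ _); rewrite hsE1 zip_mkp => hF2'.
set G2 := mkp pr rs2.
have hE2 : alg_final A (r, 1) G2 = C.
  exact: (pair_sorted _ _ _ ltr01 (final_sorted A (r, 1) G2 (ltW r1)) hF2').
clear hF2 hF2'; case: rs2 hall2 @G2 hE2 => [|q rs2] hall2 G2 hE2.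
  by move: hE2; rewrite /G2 /= => -[e]; move: r0; rewrite e ltxx.
set round := (r, pr r) :: G1 ++ G2.
have hfin : alg_final A C round = C by rewrite alg_final_cons alg_final_cat hE1.
have hcost : 2 <= alg_cost A C round.
  rewrite alg_cost_traj /round.
  have -> : traj A C ((r, pr r) :: G1 ++ G2) = D :: traj A D G1 ++ traj A (r, 1) G2.
    by rewrite -hE1 -traj_cat.
  have l1e : last D (traj A D G1) = (r, 1) by rewrite -alg_final_traj.
  have l2e : last D (traj A D G1 ++ traj A (r, 1) G2) = C.
    by rewrite last_cat l1e -alg_final_traj.
  apply: (alg_rob_lb r) => //; rewrite ?l1e ?l2e.
  - by rewrite mn_sorted //= ltW.
  - by rewrite mx_sorted //= ltW.
  - exact: mn01.
  - exact: mx01.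
have [c hc] := hrob C.
have hk : 0 < 2 - M * (2 * r) by lra.
have [N hN] := archi _ c hk.
set s := flatten (nseq N round).
have hALG : N%:R * 2 <= ALG A C s by rewrite /ALG sC; exact: rounds_ge.
have hms : map fst s = flatten (nseq N (r :: rs1 ++ q :: rs2)).
  rewrite /s; have -> : round = mkp pr (r :: rs1 ++ q :: rs2) by rewrite /round /G1 /G2 -mkp_cat.
  by rewrite map_flatten map_nseq map_fst_mkp.
set Cs := flatten (nseq N (rsched r (size rs1) (size rs2))).
have hfeas : feasible (map fst s) Cs.
  rewrite hms; apply/cov_all_feasible/cov_flatten.
  split; first by left.
  apply: cov_all_cat; exact: cov_all_nseq.
have hOle : OPT C (map fst s) <= N%:R * (2 * r).
  apply: le_trans (OPT_le C _ _ hfeas) _; exact: rsched_rounds.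
have hOge : 0 <= OPT C (map fst s).
  apply: OPT_ge; first by exists Cs.
  move=> Cs' _; exact: sched_cost_ge0.
have := hc s.
have := ler_wpM2r hOge bM.
have := ler_wpM2l (le_trans ler01 oM) hOle.
have e : N%:R * (2 - M * (2 * r)) = N%:R * 2 - M * (N%:R * (2 * r)) by ring.
lra.
Qed.
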